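(* Consider a regulator with opening degree $o\in[0,1]$ ($o=1$: fully open, ''open mode''; $o=0$: fully closed, ''closed mode''), whose operation point is given by continuous functions $o\mapsto (p_\ell(o),p_r(o),q(o))\in\mathbb{R}^3$ such that $p_\ell$ is nonincreasing in $o$, $p_r$ is nondecreasing in $o$, and $q$ is nondecreasing in $o$. Let the six target values $\underline{p}_\ell,\overline{p}_\ell,\underline{p}_r,\overline{p}_r,\underline{q},\overline{q}\in[0,\infty]$ be given (with priorities, directions and violation rules as in the context), and assume that $\underline{q}$ is violated at every opening degree (e.g. $\underline{q}=\infty$). Let $o^*\in[0,1]$ be the current opening degree and let $\rho$ be a pushing target value at $o^*$, with direction $d(\rho)$. Assume the regulator is perfectly adjusted at $o^*$ in the following sense: either ($d(\rho)$ = opening and $o^*=1$), or ($d(\rho)$ = closing and $o^*=0$), or for every $o'\neq o^*$ lying in the direction $d(\rho)$ from $o^*$ (i.e. $o'\in(o^*,1]$ if $d(\rho)$ = opening, $o'\in[0,o^* )$ if $d(\rho)$ = closing) there is a target value $\tau$ with $\pi(\tau)>\pi(\rho)$ that is violated at the operation point $(p_\ell(o'),p_r(o'),q(o'))$. Then at least one of the following holds: 1) there exists a target value $\tau$ (a ''stable'' target value) with $\pi(\tau)>\pi(\rho)$ and $d(\tau)\neq d(\rho)$ whose value equals its associated quantity at $o^*$ (e.g. $\underline{p}_\ell=p_\ell(o^* )$ if $\tau=\underline{p}_\ell$); 2) the regulator is fully open ($o^*=1$) and $\rho$ is an opening target value; 3) the regulator is fully closed ($o^*=0$) and $\rho$ is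 a closing target value.
   Context: Target values, their associated quantity, bound type, priority $\pi$ and direction $d$ (the direction in which the regulator changes its opening degree when the target value is violated): - $\underline{p}_\ell$ (minimal left pressure): lower bound $\underline{p}_\ell\le p_\ell$, $\pi=4$, closing; - $\overline{p}_r$ (maximal right pressure): upper bound $\overline{p}_r\ge p_r$, $\pi=4$, closing; - $\overline{p}_\ell$ (maximal left pressure): upper bound $\overline{p}_\ell\ge p_\ell$, $\pi=3$, opening; - $\underline{p}_r$ (minimal right pressure): lower bound $\underline{p}_r\le p_r$, $\pi=3$, opening; - $\overline{q}$ (maximal flow): upper bound $\overline{q}\ge q$, $\pi=2$, closing; - $\underline{q}$ (minimal flow): lower bound $\underline{q}\le q$, $\pi=1$, opening. A target value is satisfied at an operation point $(p_\ell,p_r,q)$ if its imposed bound holds and violated otherwise (a lower bound $\tau\le x$ is violated iff $x<\tau$; an upper bound $\tau\ge x$ is violated iff $x>\tau$). Closing means decreasing $o$, opening means increasing $o$. A pushing target value at $o^*$ is a target value that is violated at $(p_\ell(o^* ),p_r(o^* ),q(o^* ))$ and has maximal priority $\pi$ among all violated target values there (all violated target values of maximal priority have the same direction, since equal priorities only occur for equal directions). The setting models the ''perfect control'' assumption: the regulator reacts immediately and with perfect precision to target values according to the priorities, so the opening degree cannot be changed in the pushing direction without violating a higher-priority target value. The regulator is assumed not to be closed by its built-in check valve. *)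

(* Defs.v *)
From HB Require Import structures.
From mathcomp Require Import all_boot all_order all_algebra.
From mathcomp Require Import all_classical all_reals all_analysis.
Set Implicit Arguments. Unset Strict Implicit. Unset Printing Implicit Defensive.
Import Order.TTheory GRing.Theory Num.Theory.
Local Open Scope ring_scope.

Inductive target := pl_min | pr_max | pl_max | pr_min | q_max | q_min.

(* Direction in which the regulator moves when the target value is violated. *)
Inductive direction := Opening | Closing.

Definition priority (t : target) : nat :=
  match t with
  | pl_min => 4 | pr_max => 4 | pl_max => 3 | pr_min => 3 | q_max => 2 | q_min => 1
  end.

Definition dir (t : target) : direction :=
  match t with
  | pl_min => Closing | pr_max => Closing | pl_max => Opening
  | pr_min => Opening | q_max => Closing | q_min => Opening
  end.

Definition is_lower (t : target) : bool :=
  match t with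
  | pl_min | pr_min | q_min => true
  | _ => false
  end.

Section Op.
Variable R : realType.

Definition quantity (t : target) (op : R * R * R) : R :=
  let '(pl, pr, q) := op in
  match t with
  | pl_min | pl_max => pl
  | pr_min | pr_max => pr
  | q_min | q_max => q
  end.

Definition violated (tv : target -> \bar R) (op : R * R * R) (t : target) : Prop :=
  if is_lower t then ((quantity t op)%:E < tv t)%E
  else (tv t < (quantity t op)%:E)%E.

Definition pushing (tv : target -> \bar R) (op : R * R * R) (rho : target) : Prop :=
  violated tv op rho /\
  forall t, violated tv op t -> (priority t <= priority rho)%N.

End Op.

(* Main.v *)
Require Import Defs.
From HB Require Import structures.
From mathcomp Require Import all_boot all_order all_algebra.
From mathcomp Require Import all_classical all_reals all_analysis.
From mathcomp Require Import lra.
Import Order.TTheory GRing.Theory Num.Theory.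
Import numFieldNormedType.Exports.
Local Open Scope classical_set_scope.
Local Open Scope ring_scope.

Lemma cont_eps (R : realType) (f : R -> R) x :
  {within `[0, 1]%classic, continuous f} -> 0 <= x <= 1 ->
  forall e, 0 < e -> exists2 d, 0 < d &
    forall y, 0 <= y <= 1 -> `|y - x| < d -> `|f y - f x| < e.
Proof.
move=> /subspace_continuousP cf x01 e e0.
have Ax : `[0, 1]%classic x by rewrite /= in_itv /=.
move: (cf x Ax) => /cvgrPdist_lt /(_ e e0).
rewrite near_withinE => /nbhs_ballP [d /= d0 Hd].
exists d => // y y01 yx.
have := Hd y; rewrite -ball_normE /= distrC => /(_ yx).
rewrite /= in_itv /= y01 distrC; exact.
Qed.

Lemma slack_lower (R : realType) (x : R) (t : \bar R) :
  ~ (x%:E < t)%E -> t <> x%:E ->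
  exists2 e, 0 < e & forall y, `|y - x| < e -> ~ (y%:E < t)%E.
Proof.
case: t => [r| |] h hne.
- have rx : r < x.
    rewrite lt_neqAle; apply/andP; split.
      by apply/eqP => E; apply: hne; rewrite E.
    by rewrite leNgt; apply/negP => H; apply: h; rewrite lte_fin.
  exists (x - r); first by rewrite subr_gt0.
  move=> y; rewrite lte_fin => H1 H2.
  move: H1; rewrite distrC => H1.
  have := ler_norm (x - y); lra.
- by exfalso; apply: h; exact: ltry.
- by exists 1 => // y _; rewrite ltNge leNye.
Qed.

Lemma slack_upper (R : realType) (x : R) (t : \bar R) :
  ~ (t < x%:E)%E -> t <> x%:E ->
  exists2 e, 0 < e & forall y, `|y - x| < e -> ~ (t < y%:E)%E.
Proof.
case: t => [r| |] h hne.
- have rx : x < r.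
    rewrite lt_neqAle; apply/andP; split.
      by apply/eqP => E; apply: hne; rewrite E.
    by rewrite leNgt; apply/negP => H; apply: h; rewrite lte_fin.
  exists (r - x); first by rewrite subr_gt0.
  move=> y; rewrite lte_fin => H1 H2.
  have := ler_norm (y - x); lra.
- by exists 1 => // y _; rewrite ltNge leey.
- by exfalso; apply: h; exact: ltNyr.
Qed.

Theorem theorem1 (R : realType) (pl pr q : R -> R) (tv : target -> \bar R)
  (ostar : R) (rho : target)
  (cont_pl : {within `[0, 1]%classic, continuous pl})
  (cont_pr : {within `[0, 1]%classic, continuous pr})
  (cont_q : {within `[0, 1]%classic, continuous q})
  (mono_pl : {in `[0, 1] &, forall x y, x <= y -> pl y <= pl x})
  (mono_pr : {in `[0, 1] &, forall x y, x <= y -> pr x <= pr y})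
  (mono_q : {in `[0, 1] &, forall x y, x <= y -> q x <= q y})
  (tv_nonneg : forall t, (0 <= tv t)%E)
  (qmin_viol : forall o, 0 <= o <= 1 -> violated tv (pl o, pr o, q o) q_min)
  (ostar01 : 0 <= ostar <= 1)
  (rho_push : pushing tv (pl ostar, pr ostar, q ostar) rho)
  (adjusted :
     (dir rho = Opening /\ ostar = 1) \/
     (dir rho = Closing /\ ostar = 0) \/
     (forall o', 0 <= o' <= 1 ->
        (if dir rho is Opening then ostar < o' else o' < ostar) ->
        exists tau, (priority rho < priority tau)%N /\
                    violated tv (pl o', pr o', q o') tau)) :
  (exists tau, (priority rho < priority tau)%N /\ dir tau <> dir rho /\
               tv tau = (quantity tau (pl ostar, pr ostar, q ostar))%:E) \/
  (ostar = 1 /\ dir rho = Opening) \/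
  (ostar = 0 /\ dir rho = Closing).
Proof.
set op := fun o => (pl o, pr o, q o).
have in01 : forall o : R, 0 <= o <= 1 -> o \in `[0, 1] by move=> o ?; rewrite in_itv.
have mono : forall tau o', 0 <= o' <= 1 ->
    (if dir tau is Opening then ostar < o' else o' < ostar) ->
    violated tv (op o') tau -> violated tv (op ostar) tau.
  move=> tau o' o01; rewrite /violated /op.
  case: tau => /= /ltW H;
   [ have := mono_pl _ _ (in01 _ o01) (in01 _ ostar01) H
   | have := mono_pr _ _ (in01 _ o01) (in01 _ ostar01) H
   | have := mono_pl _ _ (in01 _ ostar01) (in01 _ o01) H
   | have := mono_pr _ _ (in01 _ ostar01) (in01 _ o01) H
   | have := mono_q _ _ (in01 _ o01) (in01 _ ostar01) H
   | have := mono_q _ _ (in01 _ ostar01) (in01 _ o01) H ];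
   rewrite -lee_fin => H1 H2.
  - exact: le_lt_trans H1 H2.
  - exact: lt_le_trans H2 H1.
  - exact: lt_le_trans H2 H1.
  - exact: le_lt_trans H1 H2.
  - exact: lt_le_trans H2 H1.
  - exact: le_lt_trans H1 H2.
have contq : forall tau, {within `[0, 1]%classic,
    continuous (fun o => quantity tau (op o))}.
  by case.
case: (pselect (exists tau, (priority rho < priority tau)%N /\ dir tau <> dir rho /\
               tv tau = (quantity tau (op ostar))%:E)) => [H|Hn]; first by left.
right.
have claim : forall tau, exists2 d, 0 < d & forall o', 0 <= o' <= 1 ->
    `|o' - ostar| < d ->
    (if dir rho is Opening then ostar < o' else o' < ostar) ->
    (priority rho < priority tau)%N -> ~ violated tv (op o') tau.
  move=> tau.
  case: (ltnP (priority rho) (priority tau)) => hp; last first.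
    by exists 1 => // o' _ _ _; rewrite ltnNge hp.
  have nv : ~ violated tv (op ostar) tau.
    move=> V; have := rho_push.2 _ V; by rewrite leqNgt hp.
  case: (pselect (dir tau = dir rho)) => hd.
    exists 1 => // o' o01 _ hdir _ V; apply: nv; apply: (mono tau o') => //.
    by rewrite hd.
  have ne : tv tau <> (quantity tau (op ostar))%:E.
    by move=> E; apply: Hn; exists tau.
  have [e e0 He] : exists2 e, 0 < e & forall o', 
      `|quantity tau (op o') - quantity tau (op ostar)| < e ->
      ~ violated tv (op o') tau.
    move: nv ne; rewrite /violated; case: (is_lower tau) => nv ne.
      have [e e0 He] := @slack_lower R _ _ nv ne.
      by exists e => // o' /He.
    have [e e0 He] := @slack_upper R _ _ nv ne.
    by exists e => // o' /He.
  have [d d0 Hd] := @cont_eps R _ _ (contq tau) ostar01 _ e0.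
  exists d => // o' o01 od _ _; apply: He; exact: Hd.
have [d1 d10 H1] := claim pl_min.
have [d2 d20 H2] := claim pr_max.
have [d3 d30 H3] := claim pl_max.
have [d4 d40 H4] := claim pr_min.
have [d5 d50 H5] := claim q_max.
have [d6 d60 H6] := claim q_min.
set d := Num.min d1 (Num.min d2 (Num.min d3 (Num.min d4 (Num.min d5 d6)))).
have d0 : 0 < d by rewrite /d !lt_min; repeat (apply/andP; split) => //.
have Hall : forall tau o', 0 <= o' <= 1 -> `|o' - ostar| < d ->
    (if dir rho is Opening then ostar < o' else o' < ostar) ->
    (priority rho < priority tau)%N -> ~ violated tv (op o') tau.
  move=> tau o' o01; rewrite /d !lt_min => /andP[a /andP[b /andP[c /andP[e f]]]].
  case: tau; [exact: (H1 _ o01 a) | exact: (H2 _ o01 b) | exact: (H3 _ o01 c) | exact: (H4 _ o01 e) | exact: (H5 _ o01 (proj1 (andP f))) | exact: (H6 _ o01 (proj2 (andP f)))].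
case: adjusted => [[-> ->]|[[-> ->]|A]]; [by left | by right |].
case Hd: (dir rho) Hall A => Hall A.
- case: (eqVneq ostar 1) => [->|n1]; first by left.
  have o1 : ostar < 1 by rewrite lt_neqAle n1; case/andP: ostar01.
  set m := Num.min d (1 - ostar).
  have m0 : 0 < m by rewrite /m lt_min d0 subr_gt0.
  have md : m <= d by rewrite /m ge_min lexx.
  have m1 : m <= 1 - ostar by rewrite /m ge_min lexx orbT.
  have o01 : 0 <= ostar + m / 2 <= 1.
    by apply/andP; split; move/andP: ostar01 => [? ?]; lra.
  have hdir : ostar < ostar + m / 2 by lra.
  have [tau [hp V]] := A _ o01 hdir.
  exfalso; apply: (Hall tau _ o01) => //.
  rewrite addrC addKr ger0_norm; lra.
- case: (eqVneq ostar 0) => [->|n1]; first by right.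
  have o1 : 0 < ostar by rewrite lt_neqAle eq_sym n1; case/andP: ostar01.
  set m := Num.min d ostar.
  have m0 : 0 < m by rewrite /m lt_min d0.
  have md : m <= d by rewrite /m ge_min lexx.
  have m1 : m <= ostar by rewrite /m ge_min lexx orbT.
  have o01 : 0 <= ostar - m / 2 <= 1.
    by apply/andP; split; move/andP: ostar01 => [? ?]; lra.
  have hdir : ostar - m / 2 < ostar by lra.
  have [tau [hp V]] := A _ o01 hdir.
  exfalso; apply: (Hall tau _ o01) => //.
  rewrite addrC addKr normrN ger0_norm; lra.
Qed.
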